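(* Let $J = \{k \in \mathbb{N} : \mathrm{N}(k+1) - \mathrm{N}(k) = 2\}$. Then $J = \{2^{m+1} - (m+1) - 1 : m \in \mathbb{N}\}$.
   Context: The function $\mathrm{N} : \mathbb{N} \to \mathbb{N}$, $\mathbb{N} = \{1,2,\dots\}$, is defined recursively by $\mathrm{N}(1) = 2$ and, for $k \ge 2$, $\mathrm{N}(k) = \max_{i \in \{2,\dots,k\}} \min(2i, \mathrm{N}(k-i+1) + i)$. *)

(* Defs.v *)
From mathcomp Require Import all_boot.
Set Implicit Arguments. Unset Strict Implicit. Unset Printing Implicit Defensive.

(* The recursive calls are on k - i + 1 <= k - 1, so fuel k suffices.
   The value at k = 0 (outside the domain N = {1,2,...}) is junk. *)
Fixpoint Naux (fuel k : nat) : nat :=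
  match fuel with
  | 0 => 2
  | fuel'.+1 =>
      if k <= 1 then 2
      else \max_(2 <= i < k.+1) minn (2 * i) (Naux fuel' (k - i + 1) + i)
  end.

Definition N (k : nat) : nat := Naux k k.

Lemma N_1 : N 1 = 2. Proof. by []. Qed.

(* Main.v *)
Require Import Defs.
From mathcomp Require Import all_boot.
From mathcomp Require Import zify.

Lemma Naux_fuel n : forall f1 f2 k, k <= f1 -> k <= f2 -> k <= n ->
  Naux f1 k = Naux f2 k.
Proof.
elim: n => [|n IH] f1 f2 k h1 h2 hn.
  have -> : k = 0 by lia.
  by case: f1 {h1} => [|f1]; case: f2 {h2} => [|f2].
case: f1 h1 => [|f1] h1; case: f2 h2 => [|f2] h2 /=.
- by [].
- by have -> : k <= 1 by lia.
- by have -> : k <= 1 by lia.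
case: ifP => // hk.
apply: eq_big_nat => i /andP [hi1 hi2].
congr (minn _ (_ + _)); apply: IH; lia.
Qed.

Lemma N_rec k : 1 < k ->
  N k = \max_(2 <= i < k.+1) minn (2 * i) (N (k - i + 1) + i).
Proof.
move=> hk; rewrite /N.
case: k hk => [//|k] hk /=.
have -> : (k.+1 <= 1) = false by lia.
apply: eq_big_nat => i /andP [hi1 hi2].
congr (minn _ (_ + _)); apply: (@Naux_fuel k); lia.
Qed.

Definition a (m : nat) := 2 ^ (m + 1) - (m + 1) - 1.

Lemma pow_ge m : m.+2 <= 2 ^ (m + 1).
Proof.
elim: m => [//|m IH]. rewrite addSn expnS. lia.
Qed.

Lemma a_lt m : a m < a m.+1.
Proof.
rewrite /a addSn expnS. have := pow_ge m. lia.
Qed.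

Lemma a_mono m m' : m <= m' -> a m <= a m'.
Proof.
move=> h; elim: m' h => [|m' IH] h.
  by have -> : m = 0 by lia.
case: (ltngtP m m'.+1) h => // [hl|->] _; last by [].
have := IH (@ltnSE _ _ hl); have := a_lt m'; lia.
Qed.

Lemma block k : 1 <= k -> exists m, a m < k <= a m.+1.
Proof.
elim: k => [//|k IH] _.
case: k IH => [|k] IH; first by exists 0.
have [m /andP [h1 h2]] := IH isT.
case: (ltngtP k.+1 (a m.+1)) h2 => // [hl|he] _.
  exists m; lia.
exists m.+1; have := a_lt m.+1; lia.
Qed.

Lemma main n : forall k m, k <= n -> 1 <= k -> a m < k <= a m.+1 ->
  N k = k + m + 1.
Proof.
elim: n => [|n IH] k m hn hk; first lia.
move=> /andP [hb1 hb2].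
case: (ltngtP k 1) hk => [//|hk2 _|hk1 _]; last first.
  subst k; case: m hb1 hb2 => [|m] hb1 hb2; first by [].
  have := @a_mono 1 m.+1 isT. have : a 1 = 1 by []. lia.
have hm1 : 1 <= m.
  case: m hb1 hb2 => [|m] //= hb1 hb2. have : a 1 = 1 by []. lia.
have Ha : forall q, a q.+1 = 2 * 2 ^ (q + 1) - (q + 1) - 2.
  by move=> q; rewrite /a addSn expnS; lia.
rewrite (@N_rec k hk2); apply/eqP; rewrite eqn_leq; apply/andP; split.
- apply/bigmax_leqP_seq => i; rewrite mem_iota => /andP [hi1 hi2] _.
  set j := k - i + 1.
  have [m' /andP [hj1 hj2]] := block (k - i + 1) ltac:(lia).
  rewrite (IH j m') /j; [|lia|lia|apply/andP; lia].
  case: (leqP (k - i + 1) (a m)) => hjm.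
    have hmm : m' < m.
      case: (leqP m m') => // hle. have := @a_mono _ _ hle. lia.
    lia.
  move: hb2 hjm; rewrite Ha /a. have := pow_ge m. lia.
- case: m hm1 hb1 hb2 => [//|q] _ hb1 hb2.
  set i := (k + q.+1 + 2) %/ 2.
  have hi : k + q.+1 + 1 <= 2 * i <= k + q.+1 + 2 by rewrite /i; lia.
  have hpq := pow_ge q.
  move: hb1 hb2; rewrite !Ha => hb1 hb2.
  have hj : a q < k - i + 1 by rewrite /a; lia.
  have [m' /andP [hj1 hj2]] := block (k - i + 1) ltac:(lia).
  have hqm : q <= m'.
    case: (leqP q m') => // hlt. have := @a_mono _ _ hlt. lia.
  apply: (@bigmaxn_sup_seq _ _ i); first by rewrite mem_iota; lia.
    by [].
  rewrite (IH (k - i + 1) m'); [|lia|lia|apply/andP; lia].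
  lia.
Qed.

Lemma Nblock k m : 1 <= k -> a m < k <= a m.+1 -> N k = k + m + 1.
Proof. move=> hk hb; exact: (@main k). Qed.

Theorem lemma7p20 (k : nat) :
  (1 <= k /\ N k.+1 - N k = 2) <->
  (exists m : nat, 1 <= m /\ k = 2 ^ (m + 1) - (m + 1) - 1).
Proof.
split.
- move=> [hk hd].
  have [m /andP [h1 h2]] := @block k hk.
  rewrite (@Nblock k m hk) in hd; last by lia.
  case: (ltngtP k (a m.+1)) h2 => // [hl|he] _.
    rewrite (@Nblock k.+1 m) in hd; lia.
  by exists m.+1; split => //; rewrite -/(a m.+1).
- move=> [m [hm ->]]; rewrite -/(a m).
  case: m hm => [//|q] _.
  have hq := a_lt q; have hq1 := a_lt q.+1.
  have hk : 1 <= a q.+1 by lia.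
  split => //.
  rewrite (@Nblock _ q hk); last by lia.
  rewrite (@Nblock (a q.+1).+1 q.+1); try lia.
Qed.
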